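(* Let $a,b,c,d$ be positive integers and let $G=K_{a,b,c,d}$ be the complete 4-partite graph with partite sets of sizes $a,b,c,d$. Then $\mathrm{ppn}(G)=1$ if and only if $a=b=c=d=1$.
   Context: A $k$-prime product distance labeling of a finite graph $G$ (for a positive integer $k$) is an injective map $L:V(G)\to\mathbb{Z}$ such that $|L(u)-L(v)|>1$ for all distinct vertices $u,v$ of $G$, and such that for every pair of adjacent vertices $u,v$ the integer $|L(u)-L(v)|$ has at most $k$ prime factors counted with multiplicity. The prime product number $\mathrm{ppn}(G)$ is the least positive integer $k$ such that $G$ has a $k$-prime product distance labeling. *)

(* Defs.v *)
From HB Require Import structures.
From mathcomp Require Import all_boot all_order all_algebra.
Set Implicit Arguments. Unset Strict Implicit. Unset Printing Implicit Defensive.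
Import Order.TTheory GRing.Theory Num.Theory.

Definition bigOmega (n : nat) : nat := \sum_(p <- primes n) logn p n.

(* A finite simple graph: vertex finType T with adjacency relation adj
   (assumed symmetric and irreflexive by the constructions below). *)

Definition is_kppdl (T : finType) (adj : rel T) (k : nat) (L : T -> int) : Prop :=
  injective L /\
  (forall u v : T, u != v -> (1 < `|L u - L v|)%N) /\
  (forall u v : T, adj u v -> (bigOmega `|L u - L v| <= k)%N).

Definition has_kppdl (T : finType) (adj : rel T) (k : nat) : Prop :=
  exists L : T -> int, is_kppdl adj k L.

Definition ppn_is (T : finType) (adj : rel T) (k : nat) : Prop :=
  (0 < k)%N /\ has_kppdl adj k /\
  (forall j : nat, (0 < j)%N -> has_kppdl adj j -> (k <= j)%N).

Definition K4_vert (a b c d : nat) : finType := ((('I_a + 'I_b) + 'I_c) + 'I_d)%type.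

Definition K4_part (a b c d : nat) (v : K4_vert a b c d) : nat :=
  match v with
  | inl (inl (inl _)) => 0
  | inl (inl (inr _)) => 1
  | inl (inr _) => 2
  | inr _ => 3
  end.

Definition K4_adj (a b c d : nat) : rel (K4_vert a b c d) :=
  fun u v => K4_part u != K4_part v.

(* Main.v *)
Require Import Defs.
From mathcomp Require Import all_boot all_order all_algebra zify.
Import GRing.Theory Num.Theory.

Definition P2 (D:int) := (`|D|%N = 2%N \/ (`|D| %% 2 = 1)%N).
Definition P3 (D:int) := (1 < `|D|)%N /\ (`|D|%N = 3%N \/ (`|D| %% 3 <> 0)%N).
Definition Q (D:int) := P2 D /\ P3 D.

Lemma Qsym (a b : int) : Q (a - b) -> Q (b - a).
Proof. by rewrite /Q /P2 /P3 -opprB abszN. Qed.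

Lemma t1 (x y z : int) : y = (x + 2)%R -> P2 (z - x)%R -> P2 (z - y)%R -> (`|z - x| %% 2 = 1)%N.
Proof. rewrite /P2 => ->. lia. Qed.

Lemma t2 (x z u : int) : P2 (u - z)%R -> (`|z - x| %% 2 = 1)%N -> (`|u - x| %% 2 = 1)%N -> u = (z + 2)%R \/ u = (z - 2)%R.
Proof. rewrite /P2; lia. Qed.

Lemma t3 (t : int) : (`|t| %% 2 = 1)%N -> P3 (t-4)%R -> P3 (t-2)%R -> P3 t -> P3 (t+2)%R -> False.
Proof. rewrite /P3. lia. Qed.

Lemma core (x y z u w : int) : y = (x + 2)%R -> u != w -> Q(z-x)%R -> Q(z-y)%R -> Q(u-x)%R -> Q(u-y)%R -> Q(u-z)%R -> Q(w-x)%R -> Q(w-y)%R -> Q(w-z)%R -> False.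
Proof.
move=> xy /eqP uw [z1 z1'] [z2 z2'] [u1 u1'] [u2 u2'] [u3 _] [w1 w1'] [w2 w2'] [w3 _].
have zo := t1 _ _ _ xy z1 z2.
have uo := t1 _ _ _ xy u1 u2.
have wo := t1 _ _ _ xy w1 w2.
have [] := t2 _ _ _ u3 zo uo; have [] := t2 _ _ _ w3 zo wo; move=> Ew Eu; rewrite ?Ew ?Eu in uw.
- lia.
- apply: (t3 _ zo).
  + by move: w2'; rewrite Ew xy; congr P3; lia.
  + by move: z2'; rewrite xy; congr P3; lia.
  + done.
  + by move: u1'; rewrite Eu; congr P3; lia.
- apply: (t3 _ zo).
  + by move: u2'; rewrite Eu xy; congr P3; lia.
  + by move: z2'; rewrite xy; congr P3; lia.
  + done.
  + by move: w1'; rewrite Ew; congr P3; lia.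
- lia.
Qed.

Lemma arith (x y z u w : int) : u != w ->
  Q(x-y)%R -> Q(x-z)%R -> Q(y-z)%R -> Q(x-u)%R -> Q(y-u)%R -> Q(z-u)%R ->
  Q(x-w)%R -> Q(y-w)%R -> Q(z-w)%R -> False.
Proof.
move=> uw h1 h2 h3 h4 h5 h6 h7 h8 h9.
have g1 := Qsym _ _ h1; have g2 := Qsym _ _ h2; have g3 := Qsym _ _ h3; have g4 := Qsym _ _ h4.
have g5 := Qsym _ _ h5; have g6 := Qsym _ _ h6; have g7 := Qsym _ _ h7; have g8 := Qsym _ _ h8.
have g9 := Qsym _ _ h9.
have : (y = x + 2 \/ x = y + 2 \/ z = x + 2 \/ x = z + 2 \/ z = y + 2 \/ y = z + 2)%R.
  move: h1 h2 h3 => [p1 _] [p2 _] [p3 _]; move: p1 p2 p3; rewrite /P2; lia.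
case=> [E|[E|[E|[E|[E|E]]]]].
- by apply: (core x y z u w E uw).
- by apply: (core y x z u w E uw).
- by apply: (core x z y u w E uw).
- by apply: (core z x y u w E uw).
- by apply: (core y z x u w E uw).
- by apply: (core z y x u w E uw).
Qed.

Lemma sum_ge_term (r : seq nat) (F : nat -> nat) x : x \in r -> (F x <= \sum_(i <- r) F i)%N.
Proof. by move=> xr; rewrite (big_rem x) //= leq_addr. Qed.

Lemma prime_of_omega n : (1 < n)%N -> (bigOmega n <= 1)%N -> prime n.
Proof.
move=> n1 hO.
have n0 : (0 < n)%N by lia.
set p := pdiv n.
have pp : prime p by apply: pdiv_prime.
have pn : (p %| n)%N by apply: pdiv_dvd.
have pin : p \in primes n by rewrite mem_primes pp n0 pn.
set m := (n %/ p)%N.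
have Enm : (m * p = n)%N by rewrite divnK.
have [m1|m1] : (m = 1 \/ 1 < m)%N.
  have : (m != 0)%N by apply/eqP => m0; move: Enm; rewrite m0; lia.
  lia.
  by move: Enm; rewrite m1 mul1n => <-.
exfalso.
set q := pdiv m.
have qp : prime q by apply: pdiv_prime.
have qm : (q %| m)%N by apply: pdiv_dvd.
have qn : (q %| n)%N by rewrite -Enm dvdn_mulr.
have qin : q \in primes n by rewrite mem_primes qp n0 qn.
have [eqp|neqp] := eqVneq q p.
  have : (p ^ 2 %| n)%N by rewrite -Enm expnS expn1; apply: dvdn_mul => //; rewrite -eqp.
  rewrite pfactor_dvdn // => h2.
  have := @sum_ge_term _ (fun p0 => logn p0 n) _ pin.
  rewrite /bigOmega in hO. lia.
have := @sum_ge_term _ (fun p0 => logn p0 n) _ pin.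
rewrite /bigOmega in hO.
rewrite (big_rem p) //= in hO.
have qr : q \in rem p (primes n) by rewrite (mem_rem_uniq _ (primes_uniq n)) inE neqp.
have := @sum_ge_term _ (fun p0 => logn p0 n) _ qr.
have : (0 < logn p n)%N by rewrite logn_gt0.
have : (0 < logn q n)%N by rewrite logn_gt0.
lia.
Qed.

Lemma Q_of_prime (D : int) : prime `|D| -> Q D.
Proof.
set n := `|D|%N => pn.
have n1 := prime_gt1 pn.
split; last split => //.
- rewrite /P2 -/n.
  case: (boolP (n %% 2 == 0)%N) => h; last by right; lia.
  left; apply/esym/(prime_nt_dvdP pn) => //; rewrite /dvdn //.
- rewrite -/n.
  case: (boolP (n %% 3 == 0)%N) => h; last by right; lia.
  left; apply/esym/(prime_nt_dvdP pn) => //; rewrite /dvdn //.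
Qed.

Lemma bad (T : finType) (adj : rel T) (L : T -> int) :
  is_kppdl adj 1 L -> (forall u v, adj u v -> u != v) ->
  forall v1 v2 v3 v4 v5, v4 != v5 ->
  adj v1 v2 -> adj v1 v3 -> adj v2 v3 -> adj v1 v4 -> adj v2 v4 -> adj v3 v4 ->
  adj v1 v5 -> adj v2 v5 -> adj v3 v5 -> False.
Proof.
move=> [inj [dist omg]] irr v1 v2 v3 v4 v5 n45.
have HQ : forall u v, adj u v -> Q (L u - L v)%R.
  move=> u v huv; apply: Q_of_prime; apply: prime_of_omega.
    exact: dist (irr _ _ huv).
  exact: omg.
move=> a12 a13 a23 a14 a24 a34 a15 a25 a35.
apply: (arith (L v1) (L v2) (L v3) (L v4) (L v5)); try exact: HQ.
by apply: contra n45 => /eqP /inj ->.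
Qed.

Lemma omega_prime p : prime p -> bigOmega p = 1%N.
Proof. by move=> pp; rewrite /bigOmega primes_prime // big_seq1 logn_prime // eqxx. Qed.

Definition L1 (v : K4_vert 1 1 1 1) : int :=
  match K4_part v with 0 => 0%R | 1 => 2%R | 2 => 5%R | _ => 7%R end.

Lemma K4_irr a b c d (u v : K4_vert a b c d) : K4_adj u v -> u != v.
Proof. by apply: contraTneq => ->; rewrite /K4_adj eqxx. Qed.

Theorem mainTheorem8 (a b c d : nat) :
  (0 < a)%N -> (0 < b)%N -> (0 < c)%N -> (0 < d)%N ->
  (ppn_is (@K4_adj a b c d) 1 <-> [/\ a = 1%N, b = 1%N, c = 1%N & d = 1%N]).
Proof.
move=> a0 b0 c0 d0; split.
- move=> [_ [[L hL] _]].
  have B := @bad _ _ L hL (@K4_irr a b c d).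
  have [a2|a1] : (1 < a \/ a = 1)%N by lia.
    exfalso; apply: (B (inl (inl (inr (Ordinal b0)))) (inl (inr (Ordinal c0))) (inr (Ordinal d0)) (inl (inl (inl (Ordinal a0)))) (inl (inl (inl (Ordinal a2))))) => //.
  have [b2|b1] : (1 < b \/ b = 1)%N by lia.
    exfalso; apply: (B (inl (inl (inl (Ordinal a0)))) (inl (inr (Ordinal c0))) (inr (Ordinal d0)) (inl (inl (inr (Ordinal b0)))) (inl (inl (inr (Ordinal b2))))) => //.
  have [c2|c1] : (1 < c \/ c = 1)%N by lia.
    exfalso; apply: (B (inl (inl (inl (Ordinal a0)))) (inl (inl (inr (Ordinal b0)))) (inr (Ordinal d0)) (inl (inr (Ordinal c0))) (inl (inr (Ordinal c2)))) => //.
  have [d2|d1] : (1 < d \/ d = 1)%N by lia.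
    exfalso; apply: (B (inl (inl (inl (Ordinal a0)))) (inl (inl (inr (Ordinal b0)))) (inl (inr (Ordinal c0))) (inr (Ordinal d0)) (inr (Ordinal d2))) => //.
  by [].
- case=> -> -> -> ->.
  split => //; split => //.
  exists L1; split; last split.
  + move=> u v; case: u => [[[i|i]|i]|i]; case: v => [[[j|j]|j]|j];
    rewrite /L1 /= ?(ord1 i) ?(ord1 j) => // /eqP //.
  + move=> u v; case: u => [[[i|i]|i]|i]; case: v => [[[j|j]|j]|j];
    rewrite /L1 /= ?(ord1 i) ?(ord1 j) ?eqxx //.
  + move=> u v; case: u => [[[i|i]|i]|i]; case: v => [[[j|j]|j]|j];
    rewrite /L1 /K4_adj /= // => _; rewrite omega_prime //.
Qed.
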